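(* Under Total Store Order, for all integers $\mu\ge 1$ and $q\ge 0$, $$\Pr[F_\mu \mid \Phi_\mu \text{ exists and } \Psi_\mu=q]\;\ge\;\frac{2^{-(q-1)}-2^{-\mu q}}{\binom{\mu+q-1}{q}}.$$
   Context: Fix $m\ge 1$. A random program is a sequence $x_1,\dots,x_{m+2}$ of memory operations, each with a type in $\{\mathrm{LD},\mathrm{ST}\}$: $x_1,\dots,x_m$ have i.i.d. types, each $\mathrm{ST}$ with probability $1/2$ and $\mathrm{LD}$ with probability $1/2$; $x_{m+1}$ (the critical load) has type $\mathrm{LD}$ and $x_{m+2}$ (the critical store) has type $\mathrm{ST}$. The initial order is $S_0=(x_1,\dots,x_{m+2})$. A memory model is specified by the set of ordered type pairs $(\tau_1,\tau_2)$ for which an instruction of type $\tau_2$ may be moved ahead of an immediately preceding instruction of type $\tau_1$: Sequential Consistency (SC) allows no pair; Total Store Order (TSO) allows only the pair $(\mathrm{ST},\mathrm{LD})$ (a load may move ahead of a preceding store); Weak Ordering (WO) allows all four pairs. The settling process runs rounds $r=1,\dots,m+2$. Before round $r$, the current order $S_{r-1}$ consists of $x_1,\dots,x_{r-1}$ in some order in positions $1,\dots,r-1$, followed by $x_r,\dots,x_{m+2}$ in positions $r,\dots,m+2$. In round $r$, instruction $x_r$ (starting at position $r$) repeatedly attempts to swap with the instruction immediately preceding it in the current order: the attempt fails automatically if the pair (type of the preceding instruction, type of $x_r$) is not allowed by the memory model, or if $x_r$ is the critical store and the preceding instruction is the critical load; otherwise the attempt succeeds independently with probability $1/2$. The round ends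 when an attempt fails or $x_r$ reaches position $1$; the resulting order is $S_r$. For $\mu\ge1$, $\Phi_\mu$ is the largest index $i\le m$ such that $x_i$ has type $\mathrm{ST}$ and exactly $\mu$ of $x_i,\dots,x_m$ have type $\mathrm{ST}$ (i.e. the initial position of the $\mu$-th non-critical store counting upward from the critical load), if it exists; $\Psi_\mu=m+1-\mu-\Phi_\mu$ is the number of loads among $x_{\Phi_\mu+1},\dots,x_m$. $F_\mu$ is the event that in the order $S_m$ the instructions at positions $m-\mu+1,\dots,m$ all have type $\mathrm{ST}$. *)

(* Defs.v *)
From HB Require Import structures.
From mathcomp Require Import all_boot all_order all_algebra.
Set Implicit Arguments. Unset Strict Implicit. Unset Printing Implicit Defensive.
Import Order.TTheory GRing.Theory Num.Theory.

Inductive optype := LD | ST.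
Definition isST (o : optype) : bool := if o is ST then true else false.

(* A memory model: allowed o1 o2 = an instruction of type o2 may move ahead
   of an immediately preceding instruction of type o1. *)
Definition memmodel := optype -> optype -> bool.
Definition SC : memmodel := fun _ _ => false.
Definition TSO : memmodel := fun o1 o2 =>
  match o1, o2 with ST, LD => true | _, _ => false end.
Definition WO : memmodel := fun _ _ => true.

(* Instructions are labelled 1 .. m+2 (x_1 .. x_{m+2}).
   Sample space: the types of x_1..x_m (true = ST) and an ample supply of
   independent fair coins: coin (r, k) decides the k-th (0-based) attempt
   of round r. The uniform distribution on this finite space models the
   random program together with the independent 1/2-successes. *)
Definition Omega (m : nat) : finType :=
  ({ffun 'I_m -> bool} * {ffun 'I_(m + 2) -> {ffun 'I_(m + 2) -> bool}})%type.

Definition ty (m : nat) (t : {ffun 'I_m -> bool}) (i : nat) : optype :=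
  if i == m.+1 then LD else if i == m.+2 then ST else
  if (insub i.-1 : option 'I_m) is Some j then (if t j then ST else LD) else LD.

Definition coin (m : nat) (c : {ffun 'I_(m + 2) -> {ffun 'I_(m + 2) -> bool}})
  (r k : nat) : bool :=
  if (insub r.-1 : option 'I_(m + 2)) is Some i then
    (if (insub k : option 'I_(m + 2)) is Some j then c i j else false)
  else false.

(* Instruction x currently at 0-based position p of order s; k = attempt number.
   An attempt succeeds iff the pair is allowed, it is not (critical store
   behind critical load), and the coin for this attempt says success. *)
Fixpoint climb (M : memmodel) (ty : nat -> optype) (cl cs : nat)
  (cn : nat -> bool) (x p k : nat) (s : seq nat) {struct p} : seq nat :=
  match p with
  | 0 => s
  | p'.+1 =>
    let y := nth 0 s p' in
    if [&& M (ty y) (ty x), ~~ ((x == cs) && (y == cl)) & cn k]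
    then climb M ty cl cs cn x p' k.+1 (set_nth 0 (set_nth 0 s p' x) p y)
    else s
  end.

(* Round r: x_r starts at (1-based) position r, i.e. 0-based position r-1. *)
Definition round (M : memmodel) (ty : nat -> optype) (cl cs : nat)
  (cn : nat -> nat -> bool) (r : nat) (s : seq nat) : seq nat :=
  climb M ty cl cs (cn r) r r.-1 0 s.

Definition settle (M : memmodel) (m : nat) (w : Omega m) (n : nat) : seq nat :=
  foldl (fun s r => round M (ty w.1) m.+1 m.+2 (coin w.2) r s)
        (iota 1 (m + 2)) (iota 1 n).

Definition isPhi (m : nat) (t : {ffun 'I_m -> bool}) (mu i : nat) : bool :=
  [&& 1 <= i <= m, isST (ty t i)
    & count (fun j => isST (ty t j)) (iota i (m - i + 1)) == mu].

Definition Phi_exists (m : nat) (t : {ffun 'I_m -> bool}) (mu : nat) : bool :=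
  has (isPhi t mu) (iota 1 m).

Definition Phi (m : nat) (t : {ffun 'I_m -> bool}) (mu : nat) : nat :=
  \max_(i <- iota 1 m | isPhi t mu i) i.

Definition Psi (m : nat) (t : {ffun 'I_m -> bool}) (mu : nat) : int :=
  (Posz m.+1 - Posz mu - Posz (Phi t mu))%R.

Definition Cond (m mu q : nat) (w : Omega m) : bool :=
  Phi_exists w.1 mu && (Psi w.1 mu == Posz q).

(* F_mu: in S_m, positions m-mu+1 .. m (1-based) all hold stores *)
Definition Fev (M : memmodel) (m mu : nat) (w : Omega m) : bool :=
  all (fun p => isST (ty w.1 (nth 0 (settle M w m) p))) (iota (m - mu) mu).

Definition prob_cond (T : finType) (A B : pred T) : rat :=
  (#|[set w | A w && B w]|%:R / #|[set w | B w]|%:R)%R.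

(* Main.v *)
Require Import Defs.
From HB Require Import structures.
From mathcomp Require Import all_boot all_order all_algebra.
From mathcomp Require Import zify ring lra.
From Stdlib Require Import FunctionalExtensionality.
Import Order.TTheory GRing.Theory Num.Theory.
Set Implicit Arguments. Unset Strict Implicit. Unset Printing Implicit Defensive.

Section Climb.
Variables (M : memmodel) (tyf : nat -> optype) (cl cs : nat) (cn : nat -> bool) (x : nat).

Lemma climb_size p k s : p < size s -> size (climb M tyf cl cs cn x p k s) = size s.
Proof.
elim: p k s => [//|p IH] k s /= Hp.
case: ifP => // _; rewrite IH; rewrite !size_set_nth; lia.
Qed.

Lemma climb_above p k s j : p < size s -> p < j ->
  nth 0 (climb M tyf cl cs cn x p k s) j = nth 0 s j.
Proof.
elim: p k s => [//|p IH] k s /= Hp Hj.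
case: ifP => // _; rewrite IH.
- rewrite !nth_set_nth /=. have -> : (j == p.+1) = false by apply/eqP; lia.
  rewrite nth_set_nth /=. by have -> : (j == p) = false by apply/eqP; lia.
- rewrite !size_set_nth. lia.
- lia.
Qed.

Lemma climb_Q (Q : nat -> bool) n : forall p k s, n <= p -> p < size s -> nth 0 s p = x ->
  (forall i, i < n -> let y := nth 0 s (p - i.+1) in
     [&& M (tyf y) (tyf x), ~~ ((x == cs) && (y == cl)), cn (k + i) & Q y]) ->
  forall j, p - n < j <= p -> Q (nth 0 (climb M tyf cl cs cn x p k s) j).
Proof.
elim: n => [|n IH] p k s Hnp Hps Hx Hi j Hj; first by lia.
case: p Hnp Hps Hx Hi Hj => [|p] Hnp Hps Hx Hi Hj; first by lia.
have := Hi 0 isT; rewrite /= subSS subn0 addn0 => /and4P [H1 H2 H3 H4].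
rewrite /= H1 H2 H3 /=.
set s' := set_nth 0 (set_nth 0 s p x) p.+1 (nth 0 s p).
have Hs' : size s' = size s.
  rewrite /s' !size_set_nth. lia.
have [Hjp|Hjp] := boolP (j == p.+1).
  rewrite (eqP Hjp) climb_above; [|lia|lia].
  by rewrite /s' nth_set_nth /= ?eqxx.
apply: IH; first by lia.
- lia.
- rewrite /s' nth_set_nth /=.
  have -> : (p == p.+1) = false by apply/eqP; lia.
  by rewrite nth_set_nth /= eqxx.
- move=> i Hin /=.
  have := Hi i.+1 (Hin : i.+1 < n.+1).
  rewrite /= subSS addnS /s' nth_set_nth /=.
  have -> : (p - i.+1 == p.+1) = false by apply/eqP; lia.
  rewrite nth_set_nth /=.
  by have -> : (p - i.+1 == p) = false by apply/eqP; lia.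
- lia.
Qed.

End Climb.


Definition gt m (t : {ffun 'I_m -> bool}) (j : nat) : bool :=
  if (insub j : option 'I_m) is Some i then t i else false.

Lemma ty_gt m (t : {ffun 'I_m -> bool}) i : 0 < i <= m ->
  ty t i = if gt t i.-1 then ST else LD.
Proof.
move=> Hi; rewrite /ty.
have -> : (i == m.+1) = false by apply/eqP; lia.
have -> : (i == m.+2) = false by apply/eqP; lia.
by rewrite /gt; case: (insub _).
Qed.

Lemma settle_S M m (w : Omega m) n :
  settle M w n.+1 = round M (ty w.1) m.+1 m.+2 (coin w.2) n.+1 (settle M w n).
Proof.
have E : iota 1 n.+1 = iota 1 n ++ [:: n.+1].
  by rewrite -(addn1 n) iotaD add1n addn1.
by rewrite /settle E foldl_cat.
Qed.

Lemma settle_struct M m (w : Omega m) r : r <= m + 2 ->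
  size (settle M w r) = m + 2 /\ forall j, r <= j < m + 2 -> nth 0 (settle M w r) j = j.+1.
Proof.
elim: r => [|r IH] Hr.
  rewrite /settle /= size_iota; split => // j Hj; rewrite nth_iota; lia.
have [Hs Hn] := IH (ltnW Hr).
rewrite settle_S /round /=; split.
  by rewrite climb_size // Hs; lia.
move=> j Hj; rewrite climb_above; [| rewrite Hs; lia | lia].
by apply: Hn; lia.
Qed.

Lemma TSO_ST o : TSO o ST = false. Proof. by case: o. Qed.

Lemma climb_noST tyf cl cs cn x p k s : tyf x = ST ->
  climb TSO tyf cl cs cn x p k s = s.
Proof. by case: p => //= p ->; rewrite TSO_ST. Qed.

Section Inv.
Variables (m : nat) (w : Omega m) (a : nat).
Let t := w.1.
Let c := w.2.
Definition kk (r : nat) := count (gt t) (iota a (r - a)).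
Hypothesis Gc : forall r, a.+1 < r <= m -> ~~ gt t r.-1 ->
  forall i, i < kk r.-1 -> coin c r i.

Lemma kk_le r : kk r <= r - a.
Proof. by rewrite /kk; apply: leq_trans (count_size _ _) _; rewrite size_iota. Qed.

Lemma kkS r : a <= r -> kk r.+1 = kk r + gt t r.
Proof.
move=> Har; rewrite /kk subSn // -addn1 iotaD count_cat /= addn0 subnKC //.
Qed.

Lemma settle_inv r : r <= m -> a <= r ->
  forall j, r - kk r <= j < r -> isST (ty t (nth 0 (settle TSO w r) j)).
Proof.
elim: r => [|r IH] Hrm Har j Hj.
  lia.
have [Hs Hn] : size (settle TSO w r) = m + 2 /\ forall j, r <= j < m + 2 -> nth 0 (settle TSO w r) j = j.+1.
  by apply: settle_struct; lia.
have [Ha|Ha] := eqVneq a r.+1.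
  move: Hj; rewrite /kk -Ha subnn /=; lia.
have Har' : a <= r by lia.
have IH' := IH (ltnW Hrm) Har'.
have Hkr := kk_le r.
have Hxr : nth 0 (settle TSO w r) r = r.+1 by apply: Hn; lia.
rewrite settle_S /round /=.
move: Hj; rewrite kkS //.
case Hg: (gt t r) => Hj.
- rewrite climb_noST; last by rewrite ty_gt /= ?Hg //; lia.
  have [Hjr|Hjr] := eqVneq j r.
    by rewrite Hjr Hxr ty_gt /= ?Hg //; lia.
  by apply: IH'; lia.
- rewrite addn0 in Hj.
  apply: (@climb_Q _ _ _ _ _ _ (fun y => isST (ty t y)) (kk r)).
  + lia.
  + rewrite Hs; lia.
  + exact: Hxr.
  + move=> i Hi /=.
    have Hy := IH' (r - i.+1).
    have Hy' : isST (ty t (nth 0 (settle TSO w r) (r - i.+1))) by apply: Hy; lia.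
    rewrite Hy' andbT.
    have -> : ty t r.+1 = LD by rewrite ty_gt //= ?Hg //; lia.
    move: Hy'; case: (ty t _) => //= _.
    have -> : (r.+1 == m.+2) = false by apply/eqP; lia.
    rewrite /=; apply: Gc => //; first by lia.
    by rewrite /= Hg.
  + lia.
Qed.
End Inv.


Lemma isST_if (b : bool) : isST (if b then ST else LD) = b.
Proof. by case: b. Qed.

Lemma count_ty m (t : {ffun 'I_m -> bool}) i n : 0 < i -> i + n <= m.+1 ->
  count (fun j => isST (ty t j)) (iota i n) = count (gt t) (iota i.-1 n).
Proof.
move=> Hi Hin.
have -> : iota i n = map (addn 1) (iota i.-1 n) by rewrite -iotaDl add1n prednK.
rewrite count_map; apply: eq_in_count => j; rewrite mem_iota => Hj /=.
rewrite add1n ty_gt /= ?isST_if //; lia.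
Qed.

Lemma isPhiE m (t : {ffun 'I_m -> bool}) mu i :
  isPhi t mu i = [&& 0 < i <= m, gt t i.-1 & count (gt t) (iota i.-1 (m - i + 1)) == mu].
Proof.
rewrite /isPhi; case Hi: (0 < i <= m) => //=.
rewrite count_ty; [|lia|lia].
by rewrite ty_gt ?isST_if.
Qed.

Lemma bigmax_has (s : seq nat) (P : pred nat) : has P s -> P (\max_(i <- s | P i) i).
Proof.
elim: s => [//|x s IH] /= H; rewrite big_cons.
case Px: (P x) in H *; last exact: IH.
set M := \max_(i <- s | P i) i.
case Hs: (has P s).
  by have HP := IH Hs; case: (leqP x M).
by rewrite /M big_hasC ?Hs // maxn0.
Qed.

Lemma Psi_eq m (t : {ffun 'I_m -> bool}) mu q :
  (Psi t mu == Posz q) = (m.+1 == mu + Phi t mu + q)%N.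
Proof.
rewrite /Psi; apply/eqP/eqP => H; lia.
Qed.

Lemma Cond_iff m (t : {ffun 'I_m -> bool}) mu q : 0 < mu ->
  (Phi_exists t mu && (Psi t mu == Posz q)) =
  [&& mu + q <= m, gt t (m - mu - q) & count (gt t) (iota (m - mu - q) (mu + q)) == mu].
Proof.
move=> Hmu; rewrite Psi_eq /Phi_exists.
apply/andP/and3P.
- case=> Hh /eqP He.
  have HP := bigmax_has Hh.
  rewrite -/(Phi t mu) isPhiE in HP.
  case/and3P: HP => Hi Hg Hc.
  have Ea : m - mu - q = (Phi t mu).-1 by lia.
  split; first by lia.
    by rewrite Ea.
  by rewrite Ea; have -> : mu + q = m - Phi t mu + 1 by lia.
- case=> Hq Hg /eqP Hc.
  move: Hg Hc; set a := m - mu - q => Hg Hc.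
  have Ha : a = m - mu - q by [].
  clearbody a.
  have Pa : isPhi t mu a.+1.
    rewrite isPhiE /= Hg /=; apply/andP; split; first by lia.
    have -> : m - a.+1 + 1 = mu + q by lia.
    by rewrite Hc.
  have Hh : has (isPhi t mu) (iota 1 m).
    by apply/hasP; exists a.+1 => //; rewrite mem_iota; lia.
  split => //; apply/eqP.
  suff -> : Phi t mu = a.+1 by lia.
  apply/eqP; rewrite eqn_leq; apply/andP; split.
    apply/bigmax_leqP_seq => j Hj Pj.
    rewrite isPhiE in Pj; case/and3P: Pj => Hj1 Hgj /eqP Hcj.
    rewrite leqNgt; apply/negP => Hlt.
    have E : iota a (mu + q) = iota a (j.-1 - a) ++ iota j.-1 (m - j + 1).
      have -> : iota j.-1 (m - j + 1) = iota (a + (j.-1 - a)) (m - j + 1) by congr iota; lia.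
      rewrite -iotaD; congr iota; lia.
    move: Hc; rewrite E count_cat Hcj.
    have -> : j.-1 - a = (j.-1 - a).-1.+1 by lia.
    by rewrite /= Hg; lia.
  apply: (leq_bigmax_seq (F := id)) Pa; rewrite mem_iota; lia.
Qed.

Local Open Scope ring_scope.

Definition gcons (b : bool) (g : nat -> bool) : nat -> bool :=
  fun j => if j is j'.+1 then g j' else b.

Lemma gt_ord m (t : {ffun 'I_m -> bool}) (i : 'I_m) : gt t i = t i.
Proof. by rewrite /gt valK. Qed.

Lemma gt_out m (t : {ffun 'I_m -> bool}) j : (m <= j)%N -> gt t j = false.
Proof. by move=> H; rewrite /gt insubN // -leqNgt. Qed.

Lemma sum_cons L (F : (nat -> bool) -> rat) :
  \sum_(t : {ffun 'I_L.+1 -> bool}) F (gt t) =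
  \sum_(t : {ffun 'I_L -> bool}) (F (gcons true (gt t)) + F (gcons false (gt t))).
Proof.
pose h (p : bool * {ffun 'I_L -> bool}) : {ffun 'I_L.+1 -> bool} :=
  [ffun i : 'I_L.+1 => gcons p.1 (gt p.2) i].
pose hi (t : {ffun 'I_L.+1 -> bool}) : bool * {ffun 'I_L -> bool} :=
  (t ord0, [ffun j : 'I_L => t (lift ord0 j)]).
have hK : cancel h hi.
  case=> b t'; rewrite /hi /h /=; congr pair; first by rewrite ffunE.
  by apply/ffunP => j; rewrite !ffunE /= gt_ord.
have hiK : cancel hi h.
  move=> t; apply/ffunP => i; rewrite ffunE /=.
  case: i => [[|j] Hj] /=.
    by congr (t _); apply: val_inj.
  have Hj' : (j < L)%N := Hj.
  rewrite -[j]/(val (Ordinal Hj')) gt_ord ffunE.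
  by congr (t _); apply: val_inj.
have gh : forall p, gt (h p) = gcons p.1 (gt p.2).
  move=> p; apply: functional_extensionality => j.
  case: (ltnP j L.+1) => Hj.
    by rewrite -[j]/(val (Ordinal Hj)) gt_ord ffunE.
  rewrite gt_out //; case: j Hj => [//|j] Hj /=.
  by rewrite gt_out.
rewrite (reindex h); last by exists hi => ? _; [apply: hK | apply: hiK].
under eq_bigr => p _ do rewrite gh.
rewrite -(pair_big xpredT xpredT (fun b t => F (gcons b (gt t)))) /=.
by rewrite big_bool /= big_split.
Qed.

Lemma sum_prefix a n (F : (nat -> bool) -> rat) :
  \sum_(t : {ffun 'I_(a + n) -> bool}) F (fun j => gt t (a + j)) =
  2%:R ^+ a * \sum_(t : {ffun 'I_n -> bool}) F (gt t).
Proof.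
elim: a => [|a IH].
  rewrite expr0 mul1r; apply: eq_bigr => t _; congr F.
transitivity (\sum_(t : {ffun 'I_(a + n).+1 -> bool}) F (fun j => gt t (a.+1 + j))).
  by [].
rewrite (sum_cons (a + n) (fun g => F (fun j => g (a.+1 + j)))).
have E : forall b (g : nat -> bool), (fun j => gcons b g (a.+1 + j)) = (fun j => g (a + j)).
  by move=> b g; apply: functional_extensionality => j; rewrite addSn.
under eq_bigr => t _ do rewrite !E.
by rewrite big_split /= IH exprS -mulrA mulr_natl mulr2n.
Qed.

Lemma sum_prefix' m a n (F : (nat -> bool) -> rat) : m = (a + n)%N ->
  \sum_(t : {ffun 'I_m -> bool}) F (fun j => gt t (a + j)) =
  2%:R ^+ a * \sum_(t : {ffun 'I_n -> bool}) F (gt t).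
Proof. by move=> ->; apply: sum_prefix. Qed.

Local Open Scope ring_scope.

Definition hx : rat := (2%:R)^-1.

Definition Vw (h : nat -> bool) (L : nat) : nat :=
  (\sum_(0 <= i < L) (if ~~ h i then (count h (iota 0 i)).+1 else 0))%N.

Lemma count_gcons b h n : count (gcons b h) (iota 0 n.+1) = (b + count h (iota 0 n))%N.
Proof.
rewrite /= -[1%N]/(1 + 0)%N iotaDl count_map; congr addn.
Qed.

Lemma count_gcons1 b h n : count (gcons b h) (iota 1 n) = count h (iota 0 n).
Proof. by rewrite -[1%N]/(1 + 0)%N iotaDl count_map. Qed.

Lemma count_sum (P : pred nat) L : count P (iota 0 L) = (\sum_(0 <= i < L) (P i : nat))%N.
Proof.
elim: L => [|L IH]; first by rewrite big_geq.
have -> : iota 0 L.+1 = iota 0 L ++ [:: L] by rewrite -(addn1 L) iotaD.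
by rewrite count_cat IH big_nat_recr //= addn0.
Qed.

Lemma Vw_gcons b h L : Vw (gcons b h) L.+1 =
  (~~ b + Vw h L + b * count (predC h) (iota 0 L))%N.
Proof.
rewrite /Vw big_nat_recl //= count_sum big_distrr /= -addnA -big_split /=.
congr addn; apply: eq_bigr => i _.
rewrite count_gcons1; case: (h i); case: b => /=; lia.
Qed.

Definition Sw (k L : nat) : rat := \sum_(t : {ffun 'I_L -> bool})
  (if count (gt t) (iota 0 L) == k then hx ^+ Vw (gt t) L else 0).
Definition Nw (k L : nat) : rat := \sum_(t : {ffun 'I_L -> bool})
  (if count (gt t) (iota 0 L) == k then 1 else 0).

Lemma sum_ffun0 (F : {ffun 'I_0 -> bool} -> rat) c : (forall t, F t = c) -> \sum_t F t = c.
Proof.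
move=> H; under eq_bigr => t _ do rewrite H.
by rewrite sumr_const card_ffun card_ord /= expn0.
Qed.

Lemma Sw0 k : Sw k 0 = if k == 0%N then 1 else 0.
Proof.
apply: sum_ffun0 => t /=; rewrite eq_sym; case: (k == 0%N) => //.
by rewrite /Vw big_geq.
Qed.

Lemma Nw0 k : Nw k 0 = if k == 0%N then 1 else 0.
Proof. by apply: sum_ffun0 => t /=; rewrite eq_sym. Qed.

Lemma count_predC_L h L k : count h (iota 0 L) = k ->
  count (predC h) (iota 0 L) = (L - k)%N.
Proof. move=> H; have := count_predC h (iota 0 L); rewrite size_iota H; lia. Qed.

Lemma SwS k L : Sw k.+1 L.+1 = hx ^+ (L - k) * Sw k L + hx * Sw k.+1 L.
Proof.
rewrite /Sw (sum_cons L (fun g => if count g (iota 0 L.+1) == k.+1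
   then hx ^+ Vw g L.+1 else 0)) big_split /= !mulr_sumr; congr (_ + _).
  apply: eq_bigr => t _; rewrite ?count_gcons ?count_gcons1 Vw_gcons /= add1n eqSS.
  case: eqP => [H|]; last by rewrite mulr0.
  by rewrite (count_predC_L H) mul1n add0n exprD mulrC.
apply: eq_bigr => t _; rewrite ?count_gcons ?count_gcons1 Vw_gcons /= add0n.
by case: eqP => _; rewrite ?mulr0 // mul0n addn0 add1n exprS.
Qed.

Lemma Sw0S L : Sw 0 L.+1 = hx * Sw 0 L.
Proof.
rewrite /Sw (sum_cons L (fun g => if count g (iota 0 L.+1) == 0%N
   then hx ^+ Vw g L.+1 else 0)) big_split /= mulr_sumr.
rewrite big1 ?add0r; last by move=> t _; rewrite ?count_gcons ?count_gcons1.
apply: eq_bigr => t _; rewrite ?count_gcons ?count_gcons1 Vw_gcons /= add0n.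
by case: eqP => _; rewrite ?mulr0 // mul0n addn0 add1n exprS.
Qed.

Lemma NwS k L : Nw k.+1 L.+1 = Nw k L + Nw k.+1 L.
Proof.
rewrite /Nw (sum_cons L (fun g => if count g (iota 0 L.+1) == k.+1
   then 1 else 0)) big_split /=.
by congr (_ + _); apply: eq_bigr => t _; rewrite ?count_gcons ?count_gcons1.
Qed.

Lemma Nw0S L : Nw 0 L.+1 = Nw 0 L.
Proof.
rewrite /Nw (sum_cons L (fun g => if count g (iota 0 L.+1) == 0%N
   then 1 else 0)) big_split /=.
rewrite big1 ?add0r; last by move=> t _; rewrite ?count_gcons ?count_gcons1.
by apply: eq_bigr => t _; rewrite ?count_gcons ?count_gcons1.
Qed.

Lemma NwE k L : Nw k L = ('C(L, k))%:R.
Proof.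
elim: L k => [|L IH] [|k].
- by rewrite Nw0.
- by rewrite Nw0.
- by rewrite Nw0S IH !bin0.
- by rewrite NwS !IH binS natrD addrC.
Qed.

Lemma Sw_big L k : (L < k)%N -> Sw k L = 0.
Proof.
elim: L k => [|L IH] [|k] //= Hk.
- by rewrite Sw0.
- by rewrite SwS !IH ?mulr0 ?addr0 //; lia.
Qed.

Lemma Sw_diag k : Sw k k = 1.
Proof.
elim: k => [|k IH]; first by rewrite Sw0.
by rewrite SwS IH subnn expr0 mulr1 Sw_big // mulr0 addr0.
Qed.

Lemma Sw_zero L : Sw 0 L = hx ^+ L.
Proof.
elim: L => [|L IH]; first by rewrite Sw0.
by rewrite Sw0S IH exprS.
Qed.

Lemma hx_ge0 : 0 <= hx. Proof. by rewrite /hx invr_ge0. Qed.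
Lemma hx_le1 : hx <= 1. Proof. by rewrite /hx invf_le1 // ler1n. Qed.
Lemma hx2 : 2%:R * hx = 1. Proof. by rewrite /hx mulfV. Qed.

Lemma Sw_bound k q : 2%:R * hx ^+ q - hx ^+ (k.+1 * q) <= Sw k (k + q).
Proof.
elim: k q => [|k IHk] q.
  by rewrite Sw_zero add0n mul1n mulr_natl mulr2n addrK.
elim: q => [|q IHq].
  by rewrite addn0 Sw_diag muln0 !expr0 mulr1; lra.
have -> : (k.+1 + q.+1 = (k.+1 + q).+1)%N by lia.
rewrite SwS.
have -> : (k.+1 + q - k = q.+1)%N by lia.
have -> : (k.+1 + q = k + q.+1)%N by lia.
have H1 := IHk q.+1.
have -> : (k + q.+1 = k.+1 + q)%N by lia.
have H2 := IHq.
have -> : (k.+1 + q = k + q.+1)%N by lia.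
set A := hx ^+ q.
set B := hx ^+ (k.+1 * q.+1).
set C := hx ^+ (k.+2 * q).
have EB : hx ^+ (k.+2 * q.+1) = B * hx * A.
  by rewrite /B /A -exprSr -exprD; congr (_ ^+ _); lia.
have EC : hx ^+ (k.+2 * q) = C by [].
have HCA : C <= A * A.
  by rewrite /C /A -exprD; apply: ler_wiXn2l; [exact: hx_ge0|exact: hx_le1|lia].
have Hx : hx = 2%:R^-1 by [].
have HA : 0 <= A by apply: exprn_ge0; exact: hx_ge0.
move: H1 H2; rewrite -/A -/B exprS -/A EB.
move=> H1 H2; rewrite addSn -addnS -/C in H2.
have H3 : 0 <= A * (Sw k (k + q.+1) - (2%:R * (hx * A) - B)).
  by apply: mulr_ge0 => //; rewrite subr_ge0.
rewrite Hx in H1 H2 H3 *; nra.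
Qed.

Local Open Scope ring_scope.

Section Coins.
Variables (m : nat) (t : {ffun 'I_m -> bool}) (a : nat).

Definition needs (i j : 'I_(m + 2)) : bool :=
  [&& (a < i)%N, (i < m)%N, ~~ gt t i & (j < count (gt t) (iota a (i - a)))%N].

Definition Gf (c : {ffun 'I_(m + 2) -> {ffun 'I_(m + 2) -> bool}}) : bool :=
  [forall i, forall j, needs i j ==> c i j].

Lemma Gf_Gc c : Gf c -> forall r, (a.+1 < r <= m)%N -> ~~ gt (t, c).1 r.-1 ->
  forall i, (i < kk (t, c) a r.-1)%N -> coin (t, c).2 r i.
Proof.
move=> /forallP H r Hr Hg i Hi.
have Hk := kk_le (t, c) a r.-1.
have Hr' : (r.-1 < m + 2)%N by lia.
have Hi' : (i < m + 2)%N by lia.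
rewrite /coin /=.
case: insubP => [i0 _ Ei0|]; last by rewrite Hr'.
case: insubP => [j0 _ Ej0|]; last by rewrite Hi'.
have := H i0 => /forallP /(_ j0) /implyP; apply.
rewrite /needs Ei0 Ej0 Hg /=; apply/and3P; split; [lia|lia|exact: Hi].
Qed.

Lemma if_forall (I : finType) (P : pred I) :
  (if [forall i, P i] then 1 else 0 : rat) = \prod_i (if P i then 1 else 0).
Proof.
case: forallP => H.
  by rewrite big1 // => i _; rewrite H.
have [i Hi] : exists i, ~~ P i.
  apply/existsP; apply: contraT; rewrite negb_exists => /forallP H'.
  by exfalso; apply: H => i; have := H' i; rewrite negbK.
by rewrite (bigD1 i) //= (negbTE Hi) mul0r.
Qed.

Definition Zc : rat := \prod_(i < m + 2) \prod_(j < m + 2) (2%:R : rat).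

Definition Wt : nat := (\sum_(i < m + 2) \sum_(j < m + 2) (needs i j : nat))%N.

Lemma prod_if (I : finType) (P : pred I) :
  \prod_i (if P i then hx else 1) = hx ^+ (\sum_i (P i : nat))%N.
Proof.
rewrite -prodrXr; apply: eq_bigr => i _; by case: (P i).
Qed.

Lemma card_Gf : (#|[set c | Gf c]|)%:R = Zc * hx ^+ Wt.
Proof.
rewrite -sum1_card natr_sum big_mkcond /=.
transitivity (\sum_(c : {ffun 'I_(m+2) -> {ffun 'I_(m+2) -> bool}})
   \prod_i \prod_j (if needs i j ==> c i j then (1:rat) else 0)).
  apply: eq_bigr => c _; rewrite inE /Gf.
  under [RHS]eq_bigr => i _ do rewrite -if_forall.
  by rewrite -if_forall.
rewrite -(bigA_distr_bigA (fun i (g : {ffun 'I_(m+2) -> bool}) =>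
   \prod_j (if needs i j ==> g j then (1 : rat) else 0))) /=.
under eq_bigr => i _ do rewrite -(bigA_distr_bigA (fun j (v : bool) =>
   (if needs i j ==> v then (1 : rat) else 0))) /=.
have E : forall i j, \sum_(v : bool) (if needs i j ==> v then (1:rat) else 0) =
   2%:R * (if needs i j then hx else 1).
  move=> i j; rewrite big_bool /=; case: (needs i j) => /=.
    by rewrite addr0 /hx mulfV.
  by rewrite mulr1.
under eq_bigr => i _ do under eq_bigr => j _ do rewrite E.
under eq_bigr => i _ do rewrite big_split /= prod_if.
by rewrite big_split /= /Zc /Wt -prodrXr.
Qed.

Lemma card_C : (#|{: {ffun 'I_(m + 2) -> {ffun 'I_(m + 2) -> bool}}}|)%:R = Zc.
Proof.
rewrite card_ffun card_ffun card_bool card_ord /Zc.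
by rewrite !prodr_const !card_ord !natrX.
Qed.

Lemma Zc_gt0 : 0 < Zc.
Proof. by rewrite /Zc; apply: prodr_gt0 => i _; apply: prodr_gt0. Qed.

Lemma sum_lt n K : (K <= n)%N -> (\sum_(j < n) ((j < K)%N : nat))%N = K.
Proof.
move=> HK; suff H : forall n0, (\sum_(j < n0) ((j < K)%N : nat))%N = minn K n0 by rewrite H; lia.
elim=> [|n0 IH]; first by rewrite big_ord0; lia.
by rewrite big_ord_recr /= IH; case: ltnP => H; lia.
Qed.

End Coins.

Lemma Wt_Vw m (t : {ffun 'I_m -> bool}) a : (a < m)%N -> gt t a ->
  Wt t a = Vw (fun j => gt t (a.+1 + j)) (m - a.+1).
Proof.
move=> Ham Hga; rewrite /Wt.
pose f i := if [&& (a < i)%N, (i < m)%N & ~~ gt t i] then count (gt t) (iota a (i - a)) else 0%N.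
transitivity (\sum_(i < m + 2) f i)%N.
  apply: eq_bigr => i _; rewrite /f /needs.
  case: (a < i)%N; case: (i < m)%N; case: (gt t i) => /=; try by rewrite big1.
  apply: sum_lt; apply: leq_trans (count_size _ _) _; rewrite size_iota; have := ltn_ord i; lia.
rewrite -(big_mkord xpredT f).
rewrite (big_cat_nat _ (n := a.+1)) //=; last by lia.
rewrite (big_cat_nat _ (n := m) (m := a.+1)) //=; try lia.
rewrite big1_seq; last first.
  move=> i; rewrite mem_index_iota /f => /andP [_ Hi].
  by case: ifP => // /and3P [H1 H2 _]; lia.
rewrite add0n [X in (_ + X)%N]big1_seq ?addn0; last first.
  move=> i; rewrite mem_index_iota /f => /andP [_ Hi].
  by case: ifP => // /and3P [H1 H2 _]; lia.
rewrite -[a.+1]add0n big_addn /Vw; apply: eq_big_nat => i /andP [_ Hi].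
rewrite /f.
have -> : [&& (a < i + a.+1)%N, (i + a.+1 < m)%N & ~~ gt t (i + a.+1)] =
          ~~ gt t (a.+1 + i).
  rewrite addnC; have -> : (a < a.+1 + i)%N by lia.
  by have -> : (a.+1 + i < m)%N by lia.
rewrite add0n; case: (~~ _) => //.
have -> : (i + a.+1 - a = (i.+1))%N by lia.
rewrite /= Hga add1n; congr S.
by rewrite -[a.+1]addn0 iotaDl count_map; apply: eq_count => j /=; rewrite addn0.
Qed.

Local Open Scope ring_scope.

Lemma Fev_of m (w : Omega m) mu a : (mu <= m)%N -> (a <= m)%N -> kk w a m = mu ->
  (forall r, (a.+1 < r <= m)%N -> ~~ gt w.1 r.-1 ->
     forall i, (i < kk w a r.-1)%N -> coin w.2 r i) ->
  Fev TSO mu w.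
Proof.
move=> Hmu Ha Hk Gc; rewrite /Fev; apply/allP => p; rewrite mem_iota => Hp.
apply: (settle_inv Gc) => //; rewrite Hk; lia.
Qed.

Lemma count_shift (g : nat -> bool) a n :
  count g (iota a n) = count (fun j => g (a + j)%N) (iota 0 n).
Proof. by rewrite -[a]addn0 iotaDl count_map addn0. Qed.

Lemma beta_eq mu q : (2%:R : rat) ^ (- (q%:Z - 1)) - 2%:R ^ (- (mu * q)%N%:Z) =
  2%:R * hx ^+ q - hx ^+ (mu * q).
Proof.
have -> : - (q%:Z - 1) = 1 + - q%:Z by ring.
rewrite exprzDr ?unitfE // expr1z -exprz_inv -exprz_inv.
by rewrite -!exprnP.
Qed.

Unset Implicit Arguments.
Theorem claim2 (m : nat) (hm : (1 <= m)%N) (mu q : nat) (hmu : (1 <= mu)%N)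
  (hC : (0 < #|[set w : Omega m | Cond mu q w]|)%N) :
  ((2%:R : rat) ^ (- (q%:Z - 1)) - (2%:R : rat) ^ (- (mu * q)%N%:Z))
    / ('C(mu + q - 1, q))%:R
  <= prob_cond (Fev TSO (m:=m) mu) (Cond (m:=m) mu q).
Proof.
have Hmq : (mu + q <= m)%N.
  move: hC; rewrite card_gt0 => /set0Pn [w]; rewrite inE /Cond Cond_iff //.
  by case/and3P.
set a := (m - mu - q)%N.
set L := (mu - 1 + q)%N.
have Ema : m = (a + L.+1)%N by rewrite /a /L; lia.
pose condt (t : {ffun 'I_m -> bool}) :=
  [&& (mu + q <= m)%N, gt t a & count (gt t) (iota a (mu + q)) == mu].
have HC : forall w : Omega m, Cond mu q w = condt w.1.
  by move=> w; rewrite /Cond Cond_iff.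
pose Den := \sum_(t : {ffun 'I_m -> bool}) (if condt t then 1 else 0 : rat).
pose Num := \sum_(t : {ffun 'I_m -> bool}) (if condt t then hx ^+ Wt t a else 0 : rat).
have HmqL : (mu + q = L.+1)%N by rewrite /L; lia.
have ENum : Num = 2%:R ^+ a * Sw (mu - 1) L.
  pose Fm (h0 : nat -> bool) := if h0 0%N && (count h0 (iota 0 (mu + q)) == mu)
     then hx ^+ Vw (fun j => h0 j.+1) L else 0.
  transitivity (\sum_(t : {ffun 'I_m -> bool}) Fm (fun j => gt t (a + j)%N)).
    apply: eq_bigr => t _; rewrite /condt /Fm Hmq /= addn0 count_shift.
    case Hg: (gt t a) => //=; case: eqP => // _.
    rewrite Wt_Vw //; last by rewrite /a; lia.
    have -> : (m - a.+1 = L)%N by rewrite /a /L; lia.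
    congr (_ ^+ Vw _ _); apply: functional_extensionality => j.
    by rewrite addnS addSn.
  rewrite (sum_prefix' Fm Ema); congr (_ * _).
  rewrite sum_cons /Sw; apply: eq_bigr => t _.
  rewrite /Fm /= addr0 HmqL count_gcons add1n.
  by have -> : (count (gt t) (iota 0 L)).+1 == mu = (count (gt t) (iota 0 L) == mu - 1)%N
    by apply/eqP/eqP; lia.
have EDen : Den = 2%:R ^+ a * Nw (mu - 1) L.
  pose Fd (h0 : nat -> bool) := if h0 0%N && (count h0 (iota 0 (mu + q)) == mu)
     then (1 : rat) else 0.
  transitivity (\sum_(t : {ffun 'I_m -> bool}) Fd (fun j => gt t (a + j)%N)).
    apply: eq_bigr => t _; rewrite /condt /Fd Hmq /= addn0 count_shift.
    by case Hg: (gt t a).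
  rewrite (sum_prefix' Fd Ema); congr (_ * _).
  rewrite sum_cons /Nw; apply: eq_bigr => t _.
  rewrite /Fd /= addr0 HmqL count_gcons add1n.
  by have -> : (count (gt t) (iota 0 L)).+1 == mu = (count (gt t) (iota 0 L) == mu - 1)%N
    by apply/eqP/eqP; lia.
have HCb : 0 < ('C(L, mu - 1))%:R :> rat by rewrite ltr0n bin_gt0 /L; lia.
have ECb : 'C(mu + q - 1, q) = 'C(L, mu - 1).
  rewrite -bin_sub; last by rewrite /L; lia.
  by congr 'C(_, _); rewrite /L; lia.
have H2a : 0 < (2%:R : rat) ^+ a by apply: exprn_gt0.
have HZ := Zc_gt0 m.
have EB : #|[set w : Omega m | Cond mu q w]|%:R = Den * Zc m.
  have -> : [set w : Omega m | Cond mu q w] = setX [set t | condt t] setT.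
    by apply/setP => [[t c]]; rewrite !inE HC andbT.
  rewrite cardsX cardsT natrM card_C; congr (_ * _).
  rewrite -sum1_card natr_sum big_mkcond /=; apply: eq_bigr => t _.
  by rewrite inE.
have EA : #|[set w : Omega m | condt w.1 && Gf w.1 a w.2]|%:R = Zc m * Num.
  rewrite -sum1_card natr_sum big_mkcond /=.
  transitivity (\sum_(p : Omega m)
     (fun t c => if condt t && Gf t a c then (1 : rat) else 0) p.1 p.2).
    by apply: eq_bigr => [[t c]] _; rewrite inE.
  transitivity (\sum_(t : {ffun 'I_m -> bool}) \sum_(c : {ffun 'I_(m + 2) -> {ffun 'I_(m + 2) -> bool}})
     (if condt t && Gf t a c then (1 : rat) else 0)).
    by symmetry; rewrite pair_bigA.
  rewrite /Num mulr_sumr; apply: eq_bigr => t _.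
  case: (condt t) => /=; last by rewrite big1 // mulr0.
  rewrite -card_Gf -sum1_card natr_sum [RHS]big_mkcond /=; apply: eq_bigr => c _.
  by rewrite inE.
have HAB : Zc m * Num <= #|[set w : Omega m | Fev TSO mu w && Cond mu q w]|%:R.
  rewrite -EA ler_nat; apply: subset_leq_card; apply/subsetP => w.
  rewrite !inE HC => /andP [Hc Hg]; rewrite Hc andbT.
  move: (Hc) => /and3P [_ Hga /eqP Hcnt].
  apply: (@Fev_of m w mu a); [lia | rewrite /a; lia | | ].
    by rewrite /kk; have -> : (m - a = mu + q)%N by rewrite /a; lia.
  exact: Gf_Gc Hg.
rewrite /prob_cond EB ECb beta_eq.
have Hb : 2%:R * hx ^+ q - hx ^+ (mu * q) <= Sw (mu - 1) L.
  by have := Sw_bound (mu - 1) q; have -> : (mu - 1).+1 = mu by lia.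
have HDen : 0 < Den * Zc m by rewrite EDen; apply: mulr_gt0 => //; rewrite NwE; apply: mulr_gt0.
apply: (le_trans (y := Zc m * Num / (Den * Zc m))); last first.
  by rewrite ler_pM2r // invr_gt0.
have -> : Zc m * Num / (Den * Zc m) = Sw (mu - 1) L / ('C(L, mu - 1))%:R.
  rewrite ENum EDen NwE; field.
  by apply/and3P; split; apply: lt0r_neq0.
by rewrite ler_pM2r // invr_gt0.
Qed.
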